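(* There is an algorithm that, given two strings $A$ and $B$ each of length at most $n$, computes a minimal common supersequence of $A$ and $B$ in $O(n)$ time.
   Context: $X\subseteq S$ means $X$ is a (not necessarily contiguous) subsequence of $S$. A common supersequence of $A$ and $B$ is a string $C$ with $A\subseteq C$ and $B\subseteq C$; it is minimal if no proper subsequence of $C$ is a common supersequence of $A$ and $B$. Time is measured in the standard RAM model with $O(1)$-time character comparisons. *)

(* Defs.v *)
From mathcomp Require Import all_boot.
Set Implicit Arguments. Unset Strict Implicit. Unset Printing Implicit Defensive.

Definition common_supersequence (T : eqType) (A B C : seq T) : bool :=
  subseq A C && subseq B C.

Definition minimal_common_supersequence (T : eqType) (A B C : seq T) : Prop :=
  common_supersequence A B C /\
  forall C' : seq T, subseq C' C -> C' <> C -> ~~ common_supersequence A B C'.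

(** The two input strings are read-only; characters can only be compared
   for equality (O(1) character comparisons) and copied to the output. *)
Inductive src := SrcA | SrcB.

Inductive instr :=
| IConst (d v : nat)
| IAdd (d a b : nat)
| ISub (d a b : nat)                      (* r_d := r_a - r_b (truncated) *)
| ILoad (d a : nat)
| IStore (a s : nat)
| ILen (d : nat) (x : src)
| IJlt (a b l : nat)
| IJeq (a b l : nat)
| IJchr (x : src) (a : nat) (y : src) (b l : nat)
| IOut (x : src) (a : nat)
| IHalt.

Record state (T : Type) := State {
  st_pc : nat;
  st_reg : nat -> nat;
  st_mem : nat -> nat;
  st_out : seq T }.

Definition upd (f : nat -> nat) (i v : nat) : nat -> nat :=
  fun j => if j == i then v else f j.

Section Machine.
Variables (T : eqType) (P : seq instr) (A B : seq T).

Definition input (x : src) : seq T := match x with SrcA => A | SrcB => B end.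

Definition init_state : state T := State 0 (fun _ => 0) (fun _ => 0) [::].

(* One step; [None] means the machine crashed. A halted machine stays put. *)
Definition step (s : state T) : option (state T) :=
  let: State pc r m o := s in
  match onth P pc with
  | None => None
  | Some i =>
    match i with
    | IConst d v => Some (State pc.+1 (upd r d v) m o)
    | IAdd d a b => Some (State pc.+1 (upd r d (r a + r b)) m o)
    | ISub d a b => Some (State pc.+1 (upd r d (r a - r b)) m o)
    | ILoad d a => Some (State pc.+1 (upd r d (m (r a))) m o)
    | IStore a s' => Some (State pc.+1 r (upd m (r a) (r s')) o)
    | ILen d x => Some (State pc.+1 (upd r d (size (input x))) m o)
    | IJlt a b l => Some (State (if r a < r b then l else pc.+1) r m o)
    | IJeq a b l => Some (State (if r a == r b then l else pc.+1) r m o)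
    | IJchr x a y b l =>
        match onth (input x) (r a), onth (input y) (r b) with
        | Some c1, Some c2 => Some (State (if c1 == c2 then l else pc.+1) r m o)
        | _, _ => None
        end
    | IOut x a =>
        match onth (input x) (r a) with
        | Some c => Some (State pc.+1 r m (rcons o c))
        | None => None
        end
    | IHalt => Some s
    end
  end.

Fixpoint exec (k : nat) : option (state T) :=
  match k with
  | 0 => Some init_state
  | k'.+1 => match exec k' with Some s => step s | None => None end
  end.

Definition halted (s : state T) : bool :=
  if onth P (st_pc s) is Some IHalt then true else false.

Definition halts_within (t : nat) (C : seq T) : Prop :=
  exists k, k <= t /\ exists s, exec k = Some s /\ halted s /\ st_out s = C.

End Machine.

(* Main.v *)
Require Import Defs.
From mathcomp Require Import all_boot zify.
Set Implicit Arguments. Unset Strict Implicit. Unset Printing Implicit Defensive.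

Section Comb.
Variable T : eqType.

Fixpoint G (A B : seq T) : seq T :=
  match A, B with
  | [::], _ => B
  | _, [::] => A
  | a :: A1, b :: B1 =>
      if a == b then a :: G A1 B1
      else let C1 := G A1 B in if subseq A C1 then C1 else a :: C1
  end.

Lemma subseq_eq (s t : seq T) : subseq s t -> subseq t s -> s = t.
Proof.
move=> st ts; apply/eqP; rewrite -(size_subseq_leqif st).2 eqn_leq.
by rewrite (size_subseq st) (size_subseq ts).
Qed.

Lemma subseq_drop_index (a : T) s t :
  subseq (a :: s) t -> subseq s (drop (index a t).+1 t).
Proof.
elim: t => [//|x t IH] /=.
by case: (eqVneq a x) => [_|ne]; [rewrite drop0 | move=> /IH].
Qed.

Lemma G_cs A B : subseq A (G A B) && subseq B (G A B).
Proof.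
elim: A B => [|a A1 IH] [|b B1]; rewrite /= ?eqxx ?subseq_refl ?andbT ?sub0seq //.
case: (eqVneq a b) => [<-|ne].
  by rewrite /= eqxx; have /andP[-> ->] := IH B1.
have /andP[h1 h2] := IH (b :: B1).
case: ifP => [-> //|_].
rewrite /= eqxx h1 /= eq_sym (negbTE ne).
exact: h2.
Qed.

Lemma G_min A B C' : subseq C' (G A B) -> subseq A C' -> subseq B C' -> C' = G A B.
Proof.
elim: A B C' => [|a A1 IH] B C'.
  by move=> h1 _ h2; apply: subseq_eq.
case: B => [|b B1].
  by move=> h1 h2 _; apply: subseq_eq.
rewrite [G _ _]/=.
case: (eqVneq a b) => [<-|ne].
  case: C' => [//|c C''].
  rewrite [subseq (c :: _) _]/=.
  case: (eqVneq c a) => [->|nc].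
    rewrite /= !eqxx => h1 h2 h3; by rewrite (IH B1 C'' h1 h2 h3).
  move=> h1 h2 h3.
  have h2' := subseq_trans h2 h1; have h3' := subseq_trans h3 h1.
  set C1 := G A1 B1 in h1 h2' h3' *.
  have e := IH B1 (drop (index a C1).+1 C1) (drop_subseq _ _)
     (subseq_drop_index h2') (subseq_drop_index h3').
  have : size (drop (index a C1).+1 C1) < size C1.
    have : 0 < size C1 by case: (C1) h2'.
    rewrite size_drop; lia.
  by rewrite e ltnn.
case: ifP => [sub|nsub].
  move=> h1 h2 h3; apply: (IH (b :: B1) C' h1 _ h3).
  exact: subseq_trans (subseq_cons _ _) h2.
case: C' => [//|c C''].
rewrite [subseq (c :: _) _]/=.
case: (eqVneq c a) => [->|nc].
  rewrite /= !eqxx => h1 h2 h3; rewrite (IH (b :: B1) C'' h1 h2) //.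
  by move: h3; rewrite eq_sym (negbTE ne).
move=> h1 h2 h3; have := subseq_trans h2 h1.
by rewrite nsub.
Qed.

Definition F A B := rev (G (rev A) (rev B)).

Lemma F_cs A B : subseq A (F A B) && subseq B (F A B).
Proof.
have /andP[h1 h2] := G_cs (rev A) (rev B).
by rewrite /F -(subseq_rev A) -(subseq_rev B) revK h1 h2.
Qed.

Lemma F_min A B C' : subseq C' (F A B) -> subseq A C' -> subseq B C' -> C' = F A B.
Proof.
rewrite /F -(subseq_rev C') -(subseq_rev A) -(subseq_rev B) revK => h1 h2 h3.
by rewrite -(G_min h1 h2 h3) revK.
Qed.

Lemma F0s B : F [::] B = B.
Proof. by rewrite /F /= revK. Qed.

Lemma Fs0 A : F A [::] = A.
Proof. by rewrite /F /=; case: (rev A) (revK A) => //= _ _ <-. Qed.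

Lemma F_rcons A1 a B1 b :
  F (rcons A1 a) (rcons B1 b) =
  if a == b then rcons (F A1 B1) a
  else if subseq (rcons A1 a) (F A1 (rcons B1 b)) then F A1 (rcons B1 b)
       else rcons (F A1 (rcons B1 b)) a.
Proof.
rewrite /F !rev_rcons /=.
case: (a == b); first by rewrite rev_cons.
rewrite -[rcons A1 a]revK rev_rcons -[a :: rev A1]revK subseq_rev !revK.
by case: ifP => //; rewrite rev_cons.
Qed.

Fixpoint gc (A C : seq T) : nat :=
  match C, A with
  | [::], _ => 0
  | _, [::] => 0
  | c :: C', a :: A' => if a == c then (gc A' C').+1 else gc A C'
  end.

Lemma gc_subseq A C k : k <= size A -> subseq (take k A) C = (k <= gc A C).
Proof.
elim: C A k => [|c C IH] [|a A] [|k] //=.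
move=> hk; case: ifP => _; first by rewrite IH.
by rewrite -(IH (a :: A) k.+1).
Qed.

Lemma gc_size A C : gc A C <= size C.
Proof.
elim: C A => [|c C IH] [|a A] //=; case: ifP => _ //.
- exact: IH.
- exact: leq_trans (IH (a :: A)) (leqnSn _).
Qed.

Lemma gc_sizeA A C : gc A C <= size A.
Proof.
elim: C A => [|c C IH] [|a A] //=; case: ifP => _ //; exact: IH.
Qed.

Lemma gc_rcons A C c :
  gc A (rcons C c) =
  if onth A (gc A C) is Some a then (if a == c then (gc A C).+1 else gc A C)
  else gc A C.
Proof.
elim: C A => [|c' C IH] [|a A] //=.
case: ifP => _; last exact: IH (a :: A).
by rewrite IH /=; case: (onth A (gc A C)) => [x|] //; case: ifP.
Qed.

Lemma gc_take A i : i <= size A -> gc A (take i A) = i.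
Proof.
move=> hi; apply/eqP; rewrite eqn_leq.
have h1 := gc_size A (take i A).
have h2 : size (take i A) <= i by rewrite size_take; case: ltnP.
by rewrite (leq_trans h1 h2) -gc_subseq // subseq_refl.
Qed.

End Comb.

Definition prog : seq instr := [::
  IConst 1 1;            (* 0 *)
  ILen 5 SrcA;           (* 1 *)
  ILen 3 SrcB;           (* 2 *)
  ILen 2 SrcA;           (* 3 *)
  IJeq 2 0 13;           (* 4 *)
  IJeq 3 0 13;           (* 5 *)
  ISub 2 2 1;            (* 6 *)
  ISub 9 3 1;            (* 7 *)
  IJchr SrcA 2 SrcB 9 10;(* 8 *)
  IJeq 0 0 4;            (* 9 *)
  IStore 2 1;            (* 10 *)
  ISub 3 3 1;            (* 11 *)
  IJeq 0 0 4;            (* 12 *)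
  IJeq 7 3 21;           (* 13 *)
  IOut SrcB 7;           (* 14 *)
  IJeq 4 5 19;           (* 15 *)
  IJchr SrcA 4 SrcB 7 18;(* 16 *)
  IJeq 0 0 19;           (* 17 *)
  IAdd 4 4 1;            (* 18 *)
  IAdd 7 7 1;            (* 19 *)
  IJeq 0 0 13;           (* 20 *)
  IConst 2 0;            (* 21 *)
  IJeq 2 5 33;           (* 22 *)
  ILoad 6 2;             (* 23 *)
  IJeq 6 1 26;           (* 24 *)
  IJlt 2 4 31;           (* 25 *)
  IOut SrcA 2;           (* 26 *)
  IJeq 4 5 31;           (* 27 *)
  IJchr SrcA 4 SrcA 2 30;(* 28 *)
  IJeq 0 0 31;           (* 29 *)
  IAdd 4 4 1;            (* 30 *)
  IAdd 2 2 1;            (* 31 *)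
  IJeq 0 0 22;           (* 32 *)
  IHalt                  (* 33 *)
].

Section Mach.
Variables (T : eqType) (A B : seq T).

Fixpoint run (s : state T) (k : nat) : option (state T) :=
  match k with
  | 0 => Some s
  | k'.+1 => match step prog A B s with Some s' => run s' k' | None => None end
  end.

Lemma run_last s k :
  run s k.+1 = match run s k with Some s' => step prog A B s' | None => None end.
Proof.
elim: k s => [|k IH] s /=; first by case: step.
by case: step => // s'; rewrite IH.
Qed.

Lemma exec_run k : exec prog A B k = run (init_state T) k.
Proof. by elim: k => [//|k IH]; rewrite run_last /= IH. Qed.

Lemma run_add s k1 k2 s1 : run s k1 = Some s1 -> run s (k1 + k2) = run s1 k2.
Proof.
elim: k1 s => [|k1 IH] s /=; first by case=> ->.
by case: step => // s'; apply: IH.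
Qed.

Lemma onth_some (U : Type) (s : seq U) n : n < size s -> exists x, onth s n = Some x.
Proof. by rewrite -onthTE; case: onth => // x _; exists x. Qed.

Lemma run_S s s' k : step prog A B s = Some s' -> run s k.+1 = run s' k.
Proof. by move=> /= ->. Qed.

Definition cnt (m : nat -> nat) (a b : nat) := \sum_(a <= l < b) (m l != 0 : nat).

Definition inv1 (i j : nat) (m : nat -> nat) :=
  i <= size A /\ (forall l, m l <= 1) /\ (forall l, l < i -> m l = 0) /\
      j + cnt m i (size A) = size B /\
      (forall k, i <= k < size A -> m k != 0 -> onth A k = onth B (j + cnt m i k)) /\
      (forall k, i <= k < size A -> m k = 0 -> 0 < j + cnt m i k ->
          onth A k != onth B (j + cnt m i k).-1).

Lemma cnt0 m a : cnt m a a = 0.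
Proof. by rewrite /cnt big_geq. Qed.

Lemma cntS m a b : a < b -> cnt m a b = (m a != 0) + cnt m a.+1 b.
Proof. by move=> h; rewrite /cnt big_ltn. Qed.

Lemma cnt_ext m m' a b : (forall l, a <= l < b -> m l = m' l) -> cnt m a b = cnt m' a b.
Proof. by move=> h; apply: eq_big_nat => l /h ->. Qed.

Lemma cnt_cat m a b c : a <= b -> b <= c -> cnt m a c = cnt m a b + cnt m b c.
Proof. by move=> h1 h2; rewrite /cnt (big_cat_nat h1 h2). Qed.

Lemma cnt_last m a b : a <= b -> cnt m a b.+1 = cnt m a b + (m b != 0).
Proof. by move=> h; rewrite /cnt big_nat_recr. Qed.

Lemma cnt_zero m a b : (forall l, a <= l < b -> m l = 0) -> cnt m a b = 0.
Proof.
move=> h; rewrite /cnt big1_seq // => l; rewrite mem_index_iota => /h ->; by [].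
Qed.

Lemma cnt_upd m i k : i < k -> cnt (upd m i 1) i k = (cnt m i.+1 k).+1.
Proof.
move=> h; rewrite cntS // /upd eqxx /= add1n; congr _.+1.
apply: cnt_ext => l /andP[hl _]; by rewrite gtn_eqF.
Qed.

Lemma cnt_skip m i k : i < k -> m i = 0 -> cnt m i k = cnt m i.+1 k.
Proof. by move=> h h0; rewrite cntS // h0. Qed.

Lemma inv1_match i j m : inv1 i.+1 j.+1 m -> onth A i = onth B j -> inv1 i j (upd m i 1).
Proof.
move=> [hi [hm1 [hm0 [hI1 [hI2 hI3]]]]] e.
split; first exact: ltnW.
split; first by move=> l; rewrite /upd; case: ifP.
split; first by move=> l hl; rewrite /upd ltn_eqF // hm0 // ltnW.
split; first by rewrite cnt_upd // addnS.
split.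
  move=> k /andP[hk1 hk2]; case: (ltngtP i k) hk1 => // [hik|<-] _.
    rewrite cnt_upd // /upd (gtn_eqF hik) addnS; apply: hI2; by rewrite hik.
  by rewrite cnt0 addn0.
move=> k /andP[hk1 hk2]; case: (ltngtP i k) hk1 => // [hik|<-] _.
  rewrite cnt_upd // /upd (gtn_eqF hik) addnS; move=> h0 _; apply: hI3 => //; by rewrite hik.
by rewrite /upd eqxx.
Qed.

Lemma inv1_nomatch i j m : inv1 i.+1 j.+1 m -> onth A i != onth B j -> inv1 i j.+1 m.
Proof.
move=> [hi [hm1 [hm0 [hI1 [hI2 hI3]]]]] e.
have mi : m i = 0 by apply: hm0.
split; first exact: ltnW.
split; first by [].
split; first by move=> l hl; rewrite hm0 // ltnW.
split; first by rewrite cnt_skip.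
split.
  move=> k /andP[hk1 hk2]; case: (ltngtP i k) hk1 => // [hik|<-] _.
    rewrite cnt_skip //; apply: hI2; by rewrite hik.
  by rewrite mi.
move=> k /andP[hk1 hk2]; case: (ltngtP i k) hk1 => // [hik|<-] _.
  rewrite cnt_skip //; apply: hI3; by rewrite hik.
by rewrite cnt0 addn0.
Qed.

Lemma inv1_stop i m : inv1 i 0 m -> inv1 0 0 m.
Proof.
move=> [hi [hm1 [hm0 [hI1 [hI2 hI3]]]]].
have e : forall k, i <= k -> cnt m 0 k = cnt m i k.
  by move=> k hk; rewrite (cnt_cat m (leq0n i) hk) cnt_zero // => l /andP[_ /hm0].
have z : forall k, k <= i -> cnt m 0 k = 0.
  by move=> k hk; rewrite cnt_zero // => l /andP[_ hl]; apply: hm0; apply: leq_trans hl hk.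
split => //; split => //; split => //.
split; first by rewrite e.
split.
  move=> k /andP[_ hk2]; case: (leqP i k) => hik.
    by rewrite e //; apply: hI2; rewrite hik.
  by rewrite hm0.
move=> k /andP[_ hk2]; case: (leqP i k) => hik.
  by rewrite e //; apply: hI3; rewrite hik.
by rewrite z // ltnW.
Qed.

Lemma ph1 i : forall j r m, r 0 = 0 -> r 1 = 1 -> r 4 = 0 -> r 7 = 0 -> r 5 = size A ->
  r 2 = i -> r 3 = j -> inv1 i j m ->
  exists k r' m' j0, k <= 8 * i + 2 /\ run (State 4 r m [::]) k = Some (State 13 r' m' [::]) /\
   (r' 0 = 0 /\ r' 1 = 1 /\ r' 4 = 0 /\ r' 7 = 0 /\ r' 5 = size A /\ r' 3 = j0 /\ inv1 0 j0 m').
Proof.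
elim: i => [|i IH] j r m H0 H1 H4 H7 H5 H2 H3 Hinv.
  exists 1, r, m, j; split => //.
  by rewrite /= H2 H0.
case: j H3 Hinv => [|j] H3 Hinv.
  exists 2, r, m, 0; split; first lia.
  split; first by rewrite /= H2 H0 /= H3 H0.
  do 6 (split => //); exact: inv1_stop Hinv.
move: (Hinv) => [hi [hm1 [hm0 [hI1 [hI2 hI3]]]]].
have hiA : i < size A by [].
have hjB : j < size B.
  move: hI1; rewrite /cnt; lia.
have [a Ea] := onth_some hiA.
have [b Eb] := onth_some hjB.
case: (eqVneq a b) => [eab|nab].
  have [r'' [seg [e0 [e1 [e4 [e7 [e5 [e2 e3]]]]]]]] :
    exists r'', run (State 4 r m [::]) 8 = Some (State 4 r'' (upd m i 1) [::]) /\
      r'' 0 = 0 /\ r'' 1 = 1 /\ r'' 4 = 0 /\ r'' 7 = 0 /\ r'' 5 = size A /\ r'' 2 = i /\ r'' 3 = j.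
    eexists; split.
    do 8 (erewrite run_S; last by rewrite /step /= /upd /= ?H0 ?H1 ?H2 ?H3 ?H4 ?H5 ?H7 /= ?subn1 /= ?Ea ?Eb ?eab ?eqxx /=).
    reflexivity.
    by rewrite /upd /=.
  have hinv' : inv1 i j (upd m i 1) by apply: inv1_match => //; rewrite Ea Eb eab.
  have [k [r' [m' [j0 [hk [hrun post]]]]]] := IH j r'' (upd m i 1) e0 e1 e4 e7 e5 e2 e3 hinv'.
  exists (8 + k), r', m', j0; split; first lia.
  by rewrite (run_add _ seg).
have [r'' [seg [e0 [e1 [e4 [e7 [e5 [e2 e3]]]]]]]] :
  exists r'', run (State 4 r m [::]) 6 = Some (State 4 r'' m [::]) /\
    r'' 0 = 0 /\ r'' 1 = 1 /\ r'' 4 = 0 /\ r'' 7 = 0 /\ r'' 5 = size A /\ r'' 2 = i /\ r'' 3 = j.+1.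
  eexists; split.
  do 6 (erewrite run_S; last by rewrite /step /= /upd /= ?H0 ?H1 ?H2 ?H3 ?H4 ?H5 ?H7 /= ?subn1 /= ?Ea ?Eb ?(negbTE nab) /=).
  reflexivity.
  by rewrite /upd /=.
have hinv' : inv1 i j.+1 m by apply: inv1_nomatch => //; rewrite Ea Eb; apply/eqP => [[/eqP]]; rewrite (negbTE nab).
have [k [r' [m' [j0 [hk [hrun post]]]]]] := IH j.+1 r'' m e0 e1 e4 e7 e5 e2 e3 hinv'.
exists (6 + k), r', m', j0; split; first lia.
by rewrite (run_add _ seg).
Qed.

Lemma take_onth (U : Type) (s : seq U) k x : onth s k = Some x -> take k.+1 s = rcons (take k s) x.
Proof.
move=> h; have hk : k < size s by rewrite -onthTE h.
by rewrite (take_nth x hk) (@onth_nth _ x x s k h).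
Qed.

Lemma ph2 j0 m d : forall k r, r 0 = 0 -> r 1 = 1 -> r 5 = size A -> r 3 = j0 -> r 7 = k ->
  j0 <= size B -> k <= j0 -> j0 - k = d -> r 4 = gc A (take k B) ->
  exists n r', n <= 7 * d + 1 /\
    run (State 13 r m (take k B)) n = Some (State 21 r' m (take j0 B)) /\
    r' 0 = 0 /\ r' 1 = 1 /\ r' 5 = size A /\ r' 4 = gc A (take j0 B).
Proof.
elim: d => [|d IH] k r H0 H1 H5 H3 H7 hj0 hk hd H4.
  have ek : k = j0 by lia.
  exists 1, r; split => //; split; first by rewrite /= H7 H3 ek eqxx.
  by rewrite -ek.
have hkj : k < j0 by lia.
have hkB : k < size B by lia.
have [b Eb] := onth_some hkB.
have tk := take_onth Eb.
set g := gc A (take k B) in H4.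
have hg : g <= size A by apply: gc_sizeA.
have [r'' [n0 [seg [hn0 [e0 [e1 [e5 [e3 [e7 e4]]]]]]]]] :
  exists r'' n0, run (State 13 r m (take k B)) n0 = Some (State 13 r'' m (take k.+1 B)) /\ n0 <= 7 /\
    r'' 0 = 0 /\ r'' 1 = 1 /\ r'' 5 = size A /\ r'' 3 = j0 /\ r'' 7 = k.+1 /\ r'' 4 = gc A (take k.+1 B).
  rewrite tk gc_rcons -/g.
  have nk : (k == j0) = false by rewrite ltn_eqF.
  case: (eqVneq g (size A)) => [eg|ng].
    rewrite eg onth_default //.
    eexists; exists 5; split.
      do 5 (erewrite run_S; last by rewrite /step /= /upd /= ?H0 ?H1 ?H3 ?H4 ?H5 ?H7 /= ?nk ?Eb ?eg ?eqxx /=).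
      reflexivity.
    by rewrite /upd /= ?H4 ?H7 ?H1 ?eg ?addn1.
  have hgA : g < size A by rewrite ltn_neqAle ng.
  have [a Ea] := onth_some hgA.
  rewrite Ea.
  case: (eqVneq a b) => [eab|nab].
    subst b.
    eexists; exists 7; split.
      do 7 (erewrite run_S; last by rewrite /step /= /upd /= ?H0 ?H1 ?H3 ?H4 ?H5 ?H7 /= ?nk ?Eb ?(negbTE ng) ?Ea ?eqxx /=).
      reflexivity.
    by rewrite /upd /= ?H4 ?H7 ?H1 ?eqxx ?addn1.
  eexists; exists 7; split.
    do 7 (erewrite run_S; last by rewrite /step /= /upd /= ?H0 ?H1 ?H3 ?H4 ?H5 ?H7 /= ?nk ?Eb ?(negbTE ng) ?Ea ?(negbTE nab) /=).
    reflexivity.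
  by rewrite /upd /= ?H4 ?H7 ?H1 ?(negbTE nab) ?addn1.
have [n [r' [hn [hrun post]]]] := IH k.+1 r'' e0 e1 e5 e3 e7 hj0 hkj ltac:(lia) e4.
exists (n0 + n), r'; split; first lia.
by rewrite (run_add _ seg).
Qed.

Lemma outblock r m o i a : r 0 = 0 -> r 1 = 1 -> r 5 = size A -> r 2 = i -> r 4 = gc A o ->
  onth A i = Some a ->
  exists r'' n0, run (State 26 r m o) n0 = Some (State 22 r'' m (rcons o a)) /\ n0 <= 6 /\
    r'' 0 = 0 /\ r'' 1 = 1 /\ r'' 5 = size A /\ r'' 2 = i.+1 /\ r'' 4 = gc A (rcons o a).
Proof.
move=> H0 H1 H5 H2 H4 Ea.
rewrite gc_rcons.
set g := gc A o in H4 *.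
have hg : g <= size A by apply: gc_sizeA.
case: (eqVneq g (size A)) => [eg|ng].
  rewrite eg onth_default //.
  eexists; exists 4; split.
    do 4 (erewrite run_S; last by rewrite /step /= /upd /= ?H0 ?H1 ?H2 ?H4 ?H5 /= ?Ea ?eg ?eqxx /=).
    reflexivity.
  by rewrite /upd /= ?H4 ?H2 ?H1 ?eg ?addn1.
have hgA : g < size A by rewrite ltn_neqAle ng.
have [c Ec] := onth_some hgA.
rewrite Ec.
case: (eqVneq c a) => [eca|nca].
  subst c.
  eexists; exists 6; split.
    do 6 (erewrite run_S; last by rewrite /step /= /upd /= ?H0 ?H1 ?H2 ?H4 ?H5 /= ?Ea ?(negbTE ng) ?Ec ?eqxx /=).
    reflexivity.
  by rewrite /upd /= ?H4 ?H2 ?H1 ?eqxx ?addn1.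
eexists; exists 6; split.
  do 6 (erewrite run_S; last by rewrite /step /= /upd /= ?H0 ?H1 ?H2 ?H4 ?H5 /= ?Ea ?(negbTE ng) ?Ec ?(negbTE nca) /=).
  reflexivity.
by rewrite /upd /= ?H4 ?H2 ?H1 ?(negbTE nca) ?addn1.
Qed.

Lemma link_match i J o a : onth A i = Some a -> onth B J = Some a ->
  o = F (take i A) (take J B) -> rcons o a = F (take i.+1 A) (take J.+1 B).
Proof.
move=> Ea Eb ->; by rewrite (take_onth Ea) (take_onth Eb) F_rcons eqxx.
Qed.

Lemma link_nomatch i J o a : i < size A -> onth A i = Some a -> J <= size B ->
  (J = 0 \/ onth A i != onth B J.-1) ->
  o = F (take i A) (take J B) ->
  F (take i.+1 A) (take J B) = if i < gc A o then o else rcons o a.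
Proof.
move=> hi Ea hJ hor ->.
case: J hJ hor => [|J] hJ hor.
  rewrite take0 !Fs0 gc_take ?ltnn; last exact: ltnW.
  by rewrite (take_onth Ea).
have [b Eb] := onth_some hJ.
case: hor => // hne.
have nab : a != b by move: hne => /=; apply: contra => /eqP eab; rewrite Ea Eb eab.
rewrite (take_onth Ea) (take_onth Eb) F_rcons (negbTE nab) -(take_onth Eb) -(take_onth Ea).
by rewrite gc_subseq.
Qed.

Lemma ph3 j0 m (Hinv : inv1 0 j0 m) d : forall i r o, r 0 = 0 -> r 1 = 1 -> r 5 = size A ->
  r 2 = i -> i <= size A -> size A - i = d -> r 4 = gc A o ->
  o = F (take i A) (take (j0 + cnt m 0 i) B) ->
  exists n r', n <= 10 * d + 1 /\ run (State 22 r m o) n = Some (State 33 r' m (F A B)).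
Proof.
move: (Hinv) => [_ [hm1 [_ [hI1 [hI2 hI3]]]]].
elim: d => [|d IH] i r o H0 H1 H5 H2 hi hd H4 Ho.
  have ei : i = size A by lia.
  exists 1, r; split => //.
  rewrite /= H2 H5 ei eqxx /= Ho ei hI1 !take_size //.
have hiA : i < size A by lia.
have [a Ea] := onth_some hiA.
have hJle : j0 + cnt m 0 i <= size B.
  rewrite -hI1 (cnt_cat m (leq0n i) (ltnW hiA)); lia.
have : m i = 0 \/ m i = 1 by have := hm1 i; lia.
case=> hmi.
  have eJ : j0 + cnt m 0 i.+1 = j0 + cnt m 0 i by rewrite cnt_last // hmi addn0.
  have hor : j0 + cnt m 0 i = 0 \/ onth A i != onth B (j0 + cnt m 0 i).-1.
    case: (posnP (j0 + cnt m 0 i)) => h; [by left | right].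
    by apply: hI3 => //; rewrite hiA.
  have hl := link_nomatch hiA Ea hJle hor Ho.
  case: (ltnP i (gc A o)) => hig.
    have [r'' [seg [e0 [e1 [e5 [e2 e4]]]]]] :
      exists r'', run (State 22 r m o) 6 = Some (State 22 r'' m o) /\
        r'' 0 = 0 /\ r'' 1 = 1 /\ r'' 5 = size A /\ r'' 2 = i.+1 /\ r'' 4 = gc A o.
      eexists; split.
        do 6 (erewrite run_S; last by rewrite /step /= /upd /= ?H0 ?H1 ?H2 ?H4 ?H5 /= ?(ltn_eqF hiA) ?hmi ?hig /=).
        reflexivity.
      by rewrite /upd /= ?H4 ?H2 ?H1 ?addn1.
    have [n [r' [hn hrun]]] := IH i.+1 r'' o e0 e1 e5 e2 hiA ltac:(lia) e4 ltac:(by rewrite eJ hl hig).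
    exists (6 + n), r'; split; first lia.
    by rewrite (run_add _ seg).
  have hig' : (i < gc A o) = false by rewrite ltnNge hig.
  have [r3 [seg1 [e0 [e1 [e5 [e2 e4]]]]]] :
    exists r3, run (State 22 r m o) 4 = Some (State 26 r3 m o) /\
      r3 0 = 0 /\ r3 1 = 1 /\ r3 5 = size A /\ r3 2 = i /\ r3 4 = gc A o.
    eexists; split.
      do 4 (erewrite run_S; last by rewrite /step /= /upd /= ?H0 ?H1 ?H2 ?H4 ?H5 /= ?(ltn_eqF hiA) ?hmi ?hig' /=).
      reflexivity.
    by rewrite /upd /= ?H4 ?H2 ?H1 ?H5 ?H0.
  have [r'' [n0 [seg2 [hn0 [f0 [f1 [f5 [f2 f4]]]]]]]] := outblock m e0 e1 e5 e2 e4 Ea.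
  have [n [r' [hn hrun]]] := IH i.+1 r'' (rcons o a) f0 f1 f5 f2 hiA ltac:(lia) f4
     ltac:(by rewrite eJ hl hig').
  exists (4 + (n0 + n)), r'; split; first lia.
  by rewrite (run_add _ seg1) (run_add _ seg2).
have eJ : j0 + cnt m 0 i.+1 = (j0 + cnt m 0 i).+1 by rewrite cnt_last // hmi addn1 addnS.
have Eb : onth B (j0 + cnt m 0 i) = Some a.
  by rewrite -hI2 ?hmi // hiA.
have hl := link_match Ea Eb Ho.
have [r3 [seg1 [e0 [e1 [e5 [e2 e4]]]]]] :
  exists r3, run (State 22 r m o) 3 = Some (State 26 r3 m o) /\
    r3 0 = 0 /\ r3 1 = 1 /\ r3 5 = size A /\ r3 2 = i /\ r3 4 = gc A o.
  eexists; split.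
    do 3 (erewrite run_S; last by rewrite /step /= /upd /= ?H0 ?H1 ?H2 ?H4 ?H5 /= ?(ltn_eqF hiA) ?hmi /=).
    reflexivity.
  by rewrite /upd /= ?H4 ?H2 ?H1 ?H5 ?H0.
have [r'' [n0 [seg2 [hn0 [f0 [f1 [f5 [f2 f4]]]]]]]] := outblock m e0 e1 e5 e2 e4 Ea.
have [n [r' [hn hrun]]] := IH i.+1 r'' (rcons o a) f0 f1 f5 f2 hiA ltac:(lia) f4
   ltac:(by rewrite eJ).
exists (3 + (n0 + n)), r'; split; first lia.
by rewrite (run_add _ seg1) (run_add _ seg2).
Qed.

End Mach.

Theorem mainTheorem5 :
  exists (P : seq instr) (c : nat),
    forall (T : eqType) (n : nat) (A B : seq T),
      size A <= n -> size B <= n ->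
      exists C : seq T,
        halts_within P A B (c * n + c) C /\ minimal_common_supersequence A B C.
Proof.
exists prog, 30 => T n A B hA hB.
exists (F A B); split; last first.
  split; first exact: F_cs.
  move=> C' h1 h2; apply/negP => /andP[h3 h4]; apply: h2; exact: F_min h1 h3 h4.
have [r0 [seg0 [e0 [e1 [e4 [e7 [e5 [e2 e3]]]]]]]] :
  exists r, run A B (init_state T) 4 = Some (State 4 r (fun _ => 0) [::]) /\
    r 0 = 0 /\ r 1 = 1 /\ r 4 = 0 /\ r 7 = 0 /\ r 5 = size A /\ r 2 = size A /\ r 3 = size B.
  eexists; split; first reflexivity.
  by rewrite /upd /=.
have hinv : inv1 A B (size A) (size B) (fun _ => 0).
  split => //; split => //; split => //.
  split; first by rewrite cnt0 addn0.
  split; move=> k /andP[h1 h2]; lia.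
have [k1 [r1 [m1 [j0 [hk1 [run1 [f0 [f1 [f4 [f7 [f5 [f3 hinv1]]]]]]]]]]]] :=
  ph1 e0 e1 e4 e7 e5 e2 e3 hinv.
have hj0 : j0 <= size B.
  by move: hinv1 => [_ [_ [_ [hI1 _]]]]; rewrite -hI1 leq_addr.
have [n2 [r2 [hn2 [run2 [g0 [g1 [g5 g4]]]]]]] :=
  @ph2 T A B j0 m1 j0 0 r1 f0 f1 f5 f3 f7 hj0 (leq0n _) (subn0 _) ltac:(by rewrite take0 f4).
have run3 : run A B (State 21 r2 m1 (take j0 B)) 1 = Some (State 22 (upd r2 2 0) m1 (take j0 B)).
  by [].
have [n3 [r3 [hn3 run4]]] := @ph3 T A B j0 m1 hinv1 (size A) 0 (upd r2 2 0) (take j0 B)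
   ltac:(by rewrite /upd /=) ltac:(by rewrite /upd /=) ltac:(by rewrite /upd /=)
   ltac:(by rewrite /upd /=) (leq0n _) (subn0 _) ltac:(by rewrite /upd /=)
   ltac:(by rewrite take0 cnt0 addn0 F0s).
exists (4 + (k1 + (n2 + (1 + n3)))); split; first lia.
exists (State 33 r3 m1 (F A B)); split; last by [].
rewrite take0 in run2.
by rewrite exec_run (run_add _ seg0) (run_add _ run1) (run_add _ run2) (run_add _ run3).
Qed.
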